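(* Let $\alpha_1,\dots,\alpha_n$ be real numbers and $\pi\in S_n$ a permutation with $\alpha_{\pi(1)}>\alpha_{\pi(2)}>\dots>\alpha_{\pi(n)}$. Let $w=s_{\ell_1}\cdots s_{\ell_k}$ be a reduced word for a glide in $\hat S_n$, and in the wiring diagram of $|w$ number the wires so that wire $i$ starts in position $i$; give each crossing the parameter $\alpha_{\mathrm{up}}-\alpha_{\mathrm{low}}$, where $\mathrm{up},\mathrm{low}$ are the numbers of its upper and lower wires. Then all crossing parameters are positive if and only if $t(w)\in\pi(\mathfrak C_{id})$, i.e. if and only if a (equivalently any) representative $(t_1,\dots,t_n)\in\mathbb Z^n$ of $t(w)$ satisfies $t_{\pi(1)}\ge t_{\pi(2)}\ge\dots\ge t_{\pi(n)}$.
   Context: $\hat S_n$: generators $s_0,\dots,s_{n-1}$ (indices mod $n$), relations $s_i^2=1$, $s_is_js_i=s_js_is_j$ if $i-j\equiv\pm1$, $s_is_j=s_js_i$ if $i-j\not\equiv0,\pm1\pmod n$. $\phi:\hat S_n\to S_n$, $s_i\mapsto(i\ i+1)$ for $1\le i\le n-1$, $s_0\mapsto(1\ n)$; a glide of offset $k\in\{0,\dots,n-1\}$ is $g$ with $\phi(g)(j)\equiv j+k\pmod n$. Wiring diagram: the word is drawn left to right on a cylinder with wires in positions $1,\dots,n$ (mod $n$); $s_i$ is a crossing of positions $i,i+1$ ($s_0$: positions $n$ and $1$); the upper wire of $s_i$ passes from position $i+1$ to $i$ (for $s_0$: from position $1$ to $n$). Universal cover: positions are integers, $s_i$ lifting to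 crossings of $p,p+1$ for all $p\equiv i\pmod n$, lifted wires labelled by their starting integer positions. A chamber's label is $(\mathbf s_1,\dots,\mathbf s_n)$, $\mathbf s_i=\lceil\max\{b\in S: b\equiv i\bmod n\}/n\rceil$ where $S$ is the set of labels of wires passing below it. The trajectory $t(w)\in\mathbb Z^n/\mathbb Z(1,\dots,1)$ is the label of the chamber directly above the wire labelled $1$ at the right end of the diagram minus the label of the chamber directly above wire $1$ at the left end. The dominant chamber is $\mathfrak C_{id}=\{x: x_1\ge x_2\ge\dots\ge x_n\}$. *)

(* Defs.v *)
From Stdlib Require Import ZArith Reals List Lia.
Open Scope Z_scope.

(* Universal cover of the cylinder: positions are integers.  The letter s_i
   (0 <= i < n) acts as the simultaneous swap of positions p, p+1 for all
   p = i (mod n). *)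
Definition tau (n i p : Z) : Z :=
  if Z.eqb (p mod n) (i mod n) then p + 1
  else if Z.eqb ((p - 1) mod n) (i mod n) then p - 1 else p.

Definition valid_word (n : Z) (w : list Z) : Prop :=
  Forall (fun l => 0 <= l < n) w.

(* State of the (lifted) wiring diagram after reading w left to right:
   position p |-> label (starting integer position) of the wire at p.
   This is tau_{l_1} o ... o tau_{l_k}, i.e. the affine permutation
   representing the group element s_{l_1}...s_{l_k} of \hat S_n. *)
Definition wstate (n : Z) (w : list Z) : Z -> Z :=
  fold_left (fun (sigma : Z -> Z) l => fun p => sigma (tau n l p)) w (fun p => p).

(* Two words represent the same element of \hat S_n iff they give the same
   affine permutation (faithful realization, n >= 3). *)
Definition reduced_word (n : Z) (w : list Z) : Prop :=
  forall v : list Z, valid_word n v ->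
    (forall p, wstate n v p = wstate n w p) -> (length w <= length v)%nat.

Definition is_glide (n : Z) (w : list Z) : Prop :=
  exists k, 0 <= k < n /\
    forall j, 1 <= j <= n -> (wstate n w j) mod n = (j + k) mod n.

(* Crossings of the diagram, one per letter, as pairs (upper label, lower label):
   the crossing s_l lifted to positions l, l+1; the upper wire is the one
   coming from position l+1. *)
Fixpoint crossings_aux (n : Z) (sigma : Z -> Z) (w : list Z) : list (Z * Z) :=
  match w with
  | nil => nil
  | l :: w' => (sigma (l + 1), sigma l)
                 :: crossings_aux n (fun p => sigma (tau n l p)) w'
  end.

Definition crossings (n : Z) (w : list Z) : list (Z * Z) :=
  crossings_aux n (fun p => p) w.

Definition wire_num (n b : Z) : Z := (b - 1) mod n + 1.

Definition all_params_positive (n : Z) (alpha : Z -> R) (w : list Z) : Prop :=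
  Forall (fun c => (alpha (wire_num n (fst c)) - alpha (wire_num n (snd c)) > 0)%R)
         (crossings n w).

(* Position at the right end of the lifted wire labelled 1. *)
Definition wire1_pos (n : Z) (w : list Z) : Z :=
  fold_left (fun q l => tau n l q) w 1.

Definition zceil (b n : Z) : Z := - ((- b) / n).

(* s is the label of the chamber directly above position q in state sigma:
   S = { sigma p | p <= q } (labels of the wires below the chamber),
   s_i = ceil (max {b in S | b = i mod n} / n). *)
Definition is_chamber_label (n : Z) (sigma : Z -> Z) (q : Z) (s : Z -> Z) : Prop :=
  forall i, 1 <= i <= n ->
    exists b, (exists p, p <= q /\ sigma p = b) /\ b mod n = i mod n /\
      (forall p, p <= q -> (sigma p) mod n = i mod n -> sigma p <= b) /\
      s i = zceil b n.

Definition is_trajectory (n : Z) (w : list Z) (t : Z -> Z) : Prop :=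
  exists sR sL : Z -> Z,
    is_chamber_label n (wstate n w) (wire1_pos n w) sR /\
    is_chamber_label n (fun p => p) 1 sL /\
    forall i, 1 <= i <= n -> t i = sR i - sL i.

(* Main.v *)
Require Import Defs.
From Stdlib Require Import ZArith Reals List Lia Lra.
Import ListNotations.
Open Scope Z_scope.

Lemma mod_ex n a b : 0 < n -> a mod n = b mod n -> exists c, a = b + c * n.
Proof.
  intros Hn H. exists (a / n - b / n).
  pose proof (Z.div_mod a n ltac:(lia)). pose proof (Z.div_mod b n ltac:(lia)).
  nia.
Qed.

Lemma mod_addm n b c : 0 < n -> (b + c * n) mod n = b mod n.
Proof. intros. apply Z.mod_add. lia. Qed.

Lemma mod_succ_ne n p l : 2 <= n -> p mod n = l mod n -> (p + 1) mod n = l mod n -> False.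
Proof.
  intros Hn H1 H2. rewrite <- H1 in H2. apply mod_ex in H2; [|lia].
  destruct H2 as [c Hc]. assert (c * n = 1) by lia.
  destruct (Z.le_gt_cases c 0); nia.
Qed.

Lemma tau_cases n l p :
  (p mod n = l mod n /\ tau n l p = p + 1) \/
  (p mod n <> l mod n /\ (p - 1) mod n = l mod n /\ tau n l p = p - 1) \/
  (p mod n <> l mod n /\ (p - 1) mod n <> l mod n /\ tau n l p = p).
Proof.
  unfold tau. destruct (Z.eqb_spec (p mod n) (l mod n)); auto.
  destruct (Z.eqb_spec ((p-1) mod n) (l mod n)); auto.
Qed.

Lemma tau_per n l p c : 0 < n -> tau n l (p + c * n) = tau n l p + c * n.
Proof.
  intros Hn. unfold tau.
  rewrite mod_addm by lia.
  replace (p + c * n - 1) with ((p - 1) + c * n) by ring.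
  rewrite mod_addm by lia.
  destruct (Z.eqb _ _); [lia|]. destruct (Z.eqb _ _); lia.
Qed.

Lemma tau_invol n l p : 2 <= n -> tau n l (tau n l p) = p.
Proof.
  intros Hn.
  destruct (tau_cases n l p) as [[H1 H2]|[[H1 [H2 H3]]|[H1 [H2 H3]]]]; rewrite ?H2, ?H3.
  - destruct (tau_cases n l (p+1)) as [[G1 G2]|[[G1 [G2 G3]]|[G1 [G2 G3]]]].
    + exfalso. exact (mod_succ_ne n p l Hn H1 G1).
    + lia.
    + exfalso. replace (p+1-1) with p in G2 by ring. tauto.
  - destruct (tau_cases n l (p-1)) as [[G1 G2]|[[G1 [G2 G3]]|[G1 [G2 G3]]]].
    + lia.
    + exfalso. apply (mod_succ_ne n (p-1-1) l Hn G2). replace (p-1-1+1) with (p-1) by ring. auto.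
    + tauto.
  - reflexivity.
Qed.

Lemma tau_range n l p : p - 1 <= tau n l p <= p + 1.
Proof. destruct (tau_cases n l p) as [[? ?]|[[? [? ?]]|[? [? ?]]]]; lia. Qed.

Lemma tau_up n l p : tau n l p = p + 1 -> p mod n = l mod n.
Proof. destruct (tau_cases n l p) as [[? ?]|[[? [? ?]]|[? [? ?]]]]; lia. Qed.

Lemma tau_flip n l a b : a < b -> tau n l a > tau n l b -> a mod n = l mod n /\ b = a + 1.
Proof.
  intros Hab H. pose proof (tau_range n l a). pose proof (tau_range n l b).
  assert (b = a + 1) by lia. split; [|auto].
  apply tau_up. lia.
Qed.

Lemma tau_swap n l a : 2 <= n -> a mod n = l mod n -> tau n l a = a + 1 /\ tau n l (a + 1) = a.
Proof.
  intros Hn H. unfold tau. rewrite H, Z.eqb_refl. split; [auto|].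
  destruct (Z.eqb_spec ((a+1) mod n) (l mod n)).
  - exfalso. exact (mod_succ_ne n a l Hn H e).
  - replace (a+1-1) with a by ring. rewrite H, Z.eqb_refl. ring.
Qed.

Definition pos (n : Z) (w : list Z) (x : Z) : Z := fold_left (fun q l => tau n l q) w x.

Lemma wstate_snoc n w l p : wstate n (w ++ [l]) p = wstate n w (tau n l p).
Proof. unfold wstate. rewrite fold_left_app. reflexivity. Qed.

Lemma pos_snoc n w l x : pos n (w ++ [l]) x = tau n l (pos n w x).
Proof. unfold pos. rewrite fold_left_app. reflexivity. Qed.

Lemma pos_app n A B x : pos n (A ++ B) x = pos n B (pos n A x).
Proof. unfold pos. rewrite fold_left_app. reflexivity. Qed.

Lemma wstate_app n A B p : wstate n (A ++ B) p = wstate n A (wstate n B p).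
Proof.
  revert p. induction B using rev_ind; intros p.
  - rewrite app_nil_r. reflexivity.
  - rewrite app_assoc, !wstate_snoc, IHB. reflexivity.
Qed.

Lemma wstate_cons n l u p : wstate n (l :: u) p = tau n l (wstate n u p).
Proof. change (l :: u) with ([l] ++ u). rewrite wstate_app. reflexivity. Qed.

Lemma wstate_per n w p c : 0 < n -> wstate n w (p + c * n) = wstate n w p + c * n.
Proof.
  intros Hn. revert p. induction w using rev_ind; intros p.
  - reflexivity.
  - rewrite !wstate_snoc, tau_per by lia. apply IHw.
Qed.

Lemma pos_per n w p c : 0 < n -> pos n w (p + c * n) = pos n w p + c * n.
Proof.
  intros Hn. revert p. induction w using rev_ind; intros p.
  - reflexivity.
  - rewrite !pos_snoc, IHw. apply tau_per; lia.
Qed.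

Lemma wstate_pos n w x : 2 <= n -> wstate n w (pos n w x) = x.
Proof.
  intros Hn. induction w using rev_ind.
  - reflexivity.
  - rewrite wstate_snoc, pos_snoc, tau_invol by lia. exact IHw.
Qed.

Lemma pos_wstate n w p : 2 <= n -> pos n w (wstate n w p) = p.
Proof.
  intros Hn. revert p. induction w using rev_ind; intros p.
  - reflexivity.
  - rewrite wstate_snoc, pos_snoc, IHw. apply tau_invol; lia.
Qed.

Lemma wstate_res n w p p' : 2 <= n ->
  (wstate n w p) mod n = (wstate n w p') mod n -> p mod n = p' mod n.
Proof.
  intros Hn H. apply mod_ex in H; [|lia]. destruct H as [c Hc].
  assert (p = p' + c * n).
  { rewrite <- (pos_wstate n w p Hn), Hc, pos_per, pos_wstate by lia. reflexivity. }
  subst. apply mod_addm. lia.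
Qed.

Definition refl (n a b z : Z) : Z :=
  if Z.eqb (z mod n) (a mod n) then z + b - a
  else if Z.eqb (z mod n) (b mod n) then z + a - b else z.

Lemma mod_shift n z a b : 0 < n -> z mod n = a mod n -> (z + b - a) mod n = b mod n.
Proof.
  intros Hn H. apply mod_ex in H; [|lia]. destruct H as [c Hc]. subst.
  replace (a + c * n + b - a) with (b + c * n) by ring. apply mod_addm; lia.
Qed.

Lemma refl_invol n a b z : 0 < n -> a mod n <> b mod n ->
  refl n a b (refl n a b z) = z /\ refl n b a (refl n a b z) = z.
Proof.
  intros Hn Hab. unfold refl at 2 4.
  destruct (Z.eqb_spec (z mod n) (a mod n)) as [E1|E1].
  - pose proof (mod_shift n z a b Hn E1) as E. unfold refl. rewrite E.
    rewrite Z.eqb_refl. destruct (Z.eqb_spec (b mod n) (a mod n)); [congruence|]. split; ring.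
  - destruct (Z.eqb_spec (z mod n) (b mod n)) as [E2|E2].
    + pose proof (mod_shift n z b a Hn E2) as E. unfold refl. rewrite E.
      rewrite Z.eqb_refl. destruct (Z.eqb_spec (a mod n) (b mod n)); [congruence|]. split; ring.
    + unfold refl. destruct (Z.eqb_spec (z mod n) (a mod n)); [congruence|].
      destruct (Z.eqb_spec (z mod n) (b mod n)); [congruence|]. auto.
Qed.

Lemma mod_plus1 n p p0 : 0 < n -> p mod n = (p0 + 1) mod n -> (p - 1) mod n = p0 mod n.
Proof.
  intros Hn H. apply mod_ex in H; [|lia]. destruct H as [c Hc]. subst.
  replace (p0 + 1 + c * n - 1) with (p0 + c * n) by ring. apply mod_addm; lia.
Qed.

Lemma stepR n u l p0 a b : 2 <= n -> p0 mod n = l mod n ->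
  wstate n u p0 = a -> wstate n u (p0 + 1) = b ->
  forall p, wstate n (u ++ [l]) p = refl n a b (wstate n u p).
Proof.
  intros Hn H0 Ha Hb p. rewrite wstate_snoc. unfold refl.
  destruct (tau_cases n l p) as [[H1 H2]|[[H1 [H2 H3]]|[H1 [H2 H3]]]].
  - rewrite H2. rewrite <- H0 in H1. apply mod_ex in H1; [|lia]. destruct H1 as [c Hc]. subst p.
    rewrite wstate_per, Ha by lia.
    rewrite mod_addm, Z.eqb_refl by lia.
    replace (p0 + c * n + 1) with ((p0 + 1) + c * n) by ring. rewrite wstate_per, Hb by lia. ring.
  - rewrite H3. rewrite <- H0 in H2. apply mod_ex in H2; [|lia]. destruct H2 as [c Hc].
    replace p with ((p0 + 1) + c * n) by lia. rewrite wstate_per, Hb by lia.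
    replace (p0 + 1 + c * n - 1) with (p0 + c * n) by ring. rewrite wstate_per, Ha by lia.
    rewrite mod_addm by lia.
    destruct (Z.eqb_spec (b mod n) (a mod n)) as [E|E].
    + exfalso. rewrite <- Ha, <- Hb in E. apply wstate_res in E; [|lia].
      apply (mod_succ_ne n p0 l Hn H0). congruence.
    + rewrite Z.eqb_refl. ring.
  - rewrite H3.
    destruct (Z.eqb_spec (wstate n u p mod n) (a mod n)) as [E|E].
    + exfalso. rewrite <- Ha in E. apply wstate_res in E; [|lia]. congruence.
    + destruct (Z.eqb_spec (wstate n u p mod n) (b mod n)) as [E'|E'].
      * exfalso. rewrite <- Hb in E'. apply wstate_res in E'; [|lia].
        apply mod_plus1 in E'; [|lia]. congruence.
      * reflexivity.
Qed.

Lemma del n u l1 m l2 v p1 p2 a b : 2 <= n -> a mod n <> b mod n ->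
  p1 mod n = l1 mod n -> wstate n u p1 = a -> wstate n u (p1 + 1) = b ->
  p2 mod n = l2 mod n ->
  ((wstate n (u ++ l1 :: m) p2 = a /\ wstate n (u ++ l1 :: m) (p2 + 1) = b) \/
   (wstate n (u ++ l1 :: m) p2 = b /\ wstate n (u ++ l1 :: m) (p2 + 1) = a)) ->
  forall p, wstate n (u ++ l1 :: m ++ l2 :: v) p = wstate n (u ++ m ++ v) p.
Proof.
  intros Hn Hab H1 Ha Hb H2 Hc p.
  replace (u ++ l1 :: m ++ l2 :: v) with (((u ++ l1 :: m) ++ [l2]) ++ v)
    by (rewrite <- !app_assoc; reflexivity).
  rewrite (wstate_app n ((u ++ l1 :: m) ++ [l2]) v), (wstate_app n u (m ++ v)), (wstate_app n m v).
  assert (HW : forall r, wstate n (u ++ l1 :: m) r = refl n a b (wstate n u (wstate n m r))).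
  { intros r. replace (u ++ l1 :: m) with ((u ++ [l1]) ++ m) by (rewrite <- app_assoc; reflexivity).
    rewrite wstate_app. apply (stepR n u l1 p1 a b Hn H1 Ha Hb). }
  destruct Hc as [[Ea Eb]|[Ea Eb]].
  - rewrite (stepR n _ l2 p2 a b Hn H2 Ea Eb), HW. apply refl_invol; lia.
  - rewrite (stepR n _ l2 p2 b a Hn H2 Ea Eb), HW. apply refl_invol; lia.
Qed.

Lemma pos_inj n w a b : 2 <= n -> pos n w a = pos n w b -> a = b.
Proof. intros Hn H. rewrite <- (wstate_pos n w a Hn), <- (wstate_pos n w b Hn), H. reflexivity. Qed.

Lemma flip n u v a b : 2 <= n -> pos n u a < pos n u b -> pos n (u ++ v) a > pos n (u ++ v) b ->
  exists v1 l v2, v = v1 ++ l :: v2 /\ (pos n (u ++ v1) a) mod n = l mod n /\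
    pos n (u ++ v1) b = pos n (u ++ v1) a + 1.
Proof.
  intros Hn H0. induction v using rev_ind; intros H.
  - rewrite app_nil_r in H. lia.
  - rewrite app_assoc, !pos_snoc in H.
    destruct (Z.lt_total (pos n (u ++ v) a) (pos n (u ++ v) b)) as [L|[L|L]].
    + destruct (tau_flip n x _ _ L H) as [E1 E2]. exists v, x, []. auto.
    + apply pos_inj in L; [|lia]. subst. lia.
    + destruct (IHv ltac:(lia)) as [v1 [l [v2 [E [E1 E2]]]]]. exists v1, l, (v2 ++ [x]).
      subst v. rewrite <- app_assoc. auto.
Qed.

Lemma cross_in n sigma w c : In c (crossings_aux n sigma w) <->
  exists u l v, w = u ++ l :: v /\ c = (sigma (wstate n u (l + 1)), sigma (wstate n u l)).
Proof.
  revert sigma. induction w as [|l w IH]; intros sigma; simpl.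
  - split; [tauto|]. intros [u [l [v [E _]]]]. destruct u; discriminate.
  - split.
    + intros [E|Hin].
      * exists [], l, w. auto.
      * apply IH in Hin. destruct Hin as [u [l' [v [E1 E2]]]].
        exists (l :: u), l', v. subst. rewrite !wstate_cons. auto.
    + intros [u [l' [v [E1 E2]]]]. destruct u as [|l0 u].
      * simpl in E1. injection E1 as -> ->. left. subst. reflexivity.
      * simpl in E1. injection E1 as -> ->. right. apply IH.
        exists u, l', v. subst. rewrite !wstate_cons. auto.
Qed.

Lemma valid_del n v1 l1 v2 l2 v3 : valid_word n (v1 ++ l1 :: v2 ++ l2 :: v3) -> valid_word n (v1 ++ v2 ++ v3).
Proof.
  unfold valid_word. intros H. apply Forall_app in H as [G1 H]. apply Forall_cons_iff in H as [_ H].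
  apply Forall_app in H as [G2 H]. apply Forall_cons_iff in H as [_ G3].
  apply Forall_app. split; auto. apply Forall_app. auto.
Qed.

Lemma red_del n v1 l1 v2 l2 v3 : 2 <= n -> valid_word n (v1 ++ l1 :: v2 ++ l2 :: v3) ->
  reduced_word n (v1 ++ l1 :: v2 ++ l2 :: v3) ->
  (forall p, wstate n (v1 ++ l1 :: v2 ++ l2 :: v3) p = wstate n (v1 ++ v2 ++ v3) p) -> False.
Proof.
  intros Hn Hv Hr E. specialize (Hr (v1 ++ v2 ++ v3) (valid_del _ _ _ _ _ _ Hv)).
  assert (Hl : (length (v1 ++ l1 :: v2 ++ l2 :: v3) <= length (v1 ++ v2 ++ v3))%nat).
  { apply Hr. intros p. symmetry. apply E. }
  repeat (rewrite ?length_app in Hl; simpl in Hl). lia.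
Qed.

Lemma keyK n w u0 l v0 : 2 <= n -> valid_word n w -> reduced_word n w -> w = u0 ++ l :: v0 ->
  wstate n u0 l < wstate n u0 (l + 1) /\
  pos n w (wstate n u0 l) > pos n w (wstate n u0 (l + 1)).
Proof.
  intros Hn Hv Hr Ew.
  set (x := wstate n u0 l). set (y := wstate n u0 (l + 1)).
  assert (Hxy : x mod n <> y mod n).
  { intros E. apply wstate_res in E; [|lia]. apply (mod_succ_ne n l l Hn); auto. }
  assert (Px : pos n u0 x = l) by apply pos_wstate, Hn.
  assert (Py : pos n u0 y = l + 1) by apply pos_wstate, Hn.
  split.
  - destruct (Z.lt_total x y) as [L|[L|L]]; [auto| rewrite L in Hxy; tauto |].
    exfalso.
    destruct (flip n [] u0 y x Hn ltac:(simpl; unfold pos; simpl; lia) ltac:(simpl; lia))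
      as [v1 [l' [v2 [E [E1 E2]]]]].
    simpl in E1, E2.
    assert (Ew' : w = v1 ++ l' :: v2 ++ l :: v0) by (rewrite Ew, E, <- app_assoc; reflexivity).
    rewrite Ew' in Hv, Hr.
    apply (red_del n v1 l' v2 l v0 Hn Hv Hr).
    apply (del n v1 l' v2 l v0 (pos n v1 y) l y x Hn ltac:(auto) E1).
    + apply wstate_pos; lia.
    + rewrite <- E2. apply wstate_pos; lia.
    + reflexivity.
    + right. rewrite <- E. auto.
  - destruct (Z.lt_total (pos n w x) (pos n w y)) as [L|[L|L]]; [| |lia]; exfalso.
    + assert (P1 : pos n (u0 ++ [l]) y < pos n (u0 ++ [l]) x).
      { rewrite !pos_snoc, Px, Py. destruct (tau_swap n l l Hn eq_refl) as [T1 T2].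
        rewrite T1, T2. lia. }
      destruct (flip n (u0 ++ [l]) v0 y x Hn P1 ltac:(rewrite <- app_assoc; simpl; rewrite <- Ew; lia))
        as [v1 [l' [v2 [E [E1 E2]]]]].
      assert (Ew' : w = u0 ++ l :: v1 ++ l' :: v2) by (rewrite Ew, E; reflexivity).
      rewrite Ew' in Hv, Hr.
      apply (red_del n u0 l v1 l' v2 Hn Hv Hr).
      apply (del n u0 l v1 l' v2 l (pos n ((u0 ++ [l]) ++ v1) y) x y Hn Hxy eq_refl eq_refl eq_refl).
      * exact E1.
      * right. replace (u0 ++ l :: v1) with ((u0 ++ [l]) ++ v1) by (rewrite <- app_assoc; reflexivity).
        rewrite <- E2. split; apply wstate_pos; lia.
    + apply pos_inj in L; [|lia]. rewrite L in Hxy. tauto.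
Qed.

Definition Dd (n : Z) (v : list Z) (x : Z) : Z := pos n v x - x.

Lemma Dd_per n v x c : 0 < n -> Dd n v (x + c * n) = Dd n v x.
Proof. intros Hn. unfold Dd. rewrite pos_per by lia. ring. Qed.

Lemma Dd_cong n v x y : 0 < n -> x mod n = y mod n -> Dd n v x = Dd n v y.
Proof. intros Hn H. apply mod_ex in H; [|lia]. destruct H as [c ->]. apply Dd_per; lia. Qed.

Lemma rep_ex n p : 0 < n -> exists j c, 1 <= j <= n /\ p = j + c * n.
Proof.
  intros Hn. exists ((p - 1) mod n + 1), ((p - 1) / n).
  pose proof (Z.div_mod (p - 1) n ltac:(lia)). pose proof (Z.mod_pos_bound (p - 1) n Hn). lia.
Qed.

Lemma glide_D n w : 2 <= n -> is_glide n w -> forall x y, exists e, Dd n w x - Dd n w y = e * n.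
Proof.
  intros Hn [k [Hk Hg]].
  assert (G : forall p, (wstate n w p) mod n = (p + k) mod n).
  { intros p. destruct (rep_ex n p ltac:(lia)) as [j [c [Hj ->]]].
    rewrite wstate_per by lia. rewrite mod_addm by lia.
    replace (j + c * n + k) with ((j + k) + c * n) by ring. rewrite mod_addm by lia. auto. }
  assert (G2 : forall x, exists c, Dd n w x = - k + c * n).
  { intros x. pose proof (G (pos n w x)) as E. rewrite wstate_pos in E by lia.
    apply mod_ex in E; [|lia]. destruct E as [c Hc]. exists (- c). unfold Dd. lia. }
  intros x y. destruct (G2 x) as [c1 H1]. destruct (G2 y) as [c2 H2].
  exists (c1 - c2). lia.
Qed.

Lemma zc n i b c e : 2 <= n -> 1 <= i <= n -> b = i + c * n -> b <= 1 + e * n < b + n ->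
  zceil b n = e + (if i =? 1 then 1 else 0).
Proof.
  intros Hn Hi Hb He. unfold zceil. destruct (Z.eqb_spec i 1) as [E|E].
  - subst i. assert (c <= e) by nia. assert (e <= c) by nia.
    assert (c = e) by lia. subst.
    rewrite <- (Z.div_unique (- (1 + e * n)) n (- e - 1) (n - 1)); [ring|lia|ring].
  - assert (c <= e - 1) by nia. assert (e - 1 <= c) by nia.
    assert (c = e - 1) by lia. subst.
    rewrite <- (Z.div_unique (- (i + (e - 1) * n)) n (- e) (n - i)); [ring|lia|ring].
Qed.

Lemma chamber_val n v s : 2 <= n ->
  is_chamber_label n (wstate n v) (pos n v 1) s ->
  forall i e, 1 <= i <= n -> Dd n v 1 - Dd n v i = e * n ->
  s i = e + (if i =? 1 then 1 else 0).
Proof.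
  intros Hn Hs i e Hi He.
  destruct (Hs i Hi) as [b [[p [Hp Hsp]] [Hbm [Hmax Hsb]]]].
  rewrite Hsb. apply mod_ex in Hbm; [|lia]. destruct Hbm as [c Hc].
  assert (P1 : pos n v b = p) by (rewrite <- Hsp; apply pos_wstate; lia).
  assert (P2 : pos n v (b + n) > pos n v 1).
  { destruct (Z.le_gt_cases (pos n v (b + n)) (pos n v 1)) as [L|L]; [|lia].
    exfalso. specialize (Hmax _ L). rewrite wstate_pos in Hmax by lia.
    assert (b + n <= b); [|lia]. apply Hmax. rewrite Hc.
    replace (i + c * n + n) with (i + (c + 1) * n) by ring. apply mod_addm; lia. }
  replace (b + n) with (b + 1 * n) in P2 by ring. rewrite pos_per in P2 by lia.
  assert (Db : Dd n v b = Dd n v i) by (rewrite Hc; apply Dd_per; lia).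
  unfold Dd in Db, He.
  apply (zc n i b c e Hn Hi Hc). lia.
Qed.

Lemma chamber_exists n v : 2 <= n ->
  (forall x y, exists e, Dd n v x - Dd n v y = e * n) ->
  exists s, is_chamber_label n (wstate n v) (pos n v 1) s.
Proof.
  intros Hn HD.
  set (bf := fun i => i + ((Dd n v 1 - Dd n v i) / n - (if i =? 1 then 0 else 1)) * n).
  exists (fun i => zceil (bf i) n). intros i Hi.
  destruct (HD 1 i) as [e He].
  assert (Ee : (Dd n v 1 - Dd n v i) / n = e) by (rewrite He; apply Z.div_mul; lia).
  assert (Hb : bf i = i + (e - (if i =? 1 then 0 else 1)) * n) by (unfold bf; rewrite Ee; reflexivity).
  assert (Hr : bf i <= 1 + e * n < bf i + n).
  { rewrite Hb. destruct (Z.eqb_spec i 1); lia. }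
  assert (Db : Dd n v (bf i) = Dd n v i) by (rewrite Hb; apply Dd_per; lia).
  unfold Dd in Db, He.
  exists (bf i). split; [|split; [|split]].
  - exists (pos n v (bf i)). split; [lia|]. apply wstate_pos; lia.
  - rewrite Hb. apply mod_addm; lia.
  - intros p Hp Hm.
    assert (Hm' : wstate n v p mod n = bf i mod n).
    { rewrite Hm, Hb, mod_addm; lia. }
    apply mod_ex in Hm'; [|lia]. destruct Hm' as [c Hc].
    assert (pos n v (wstate n v p) = pos n v (bf i) + c * n) by (rewrite Hc; apply pos_per; lia).
    rewrite pos_wstate in H by lia. assert (c * n < n) by lia.
    assert (c <= 0) by nia. rewrite Hc. nia.
  - reflexivity.
Qed.

Lemma traj_val n w t : 2 <= n -> (forall x y, exists e, Dd n w x - Dd n w y = e * n) ->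
  is_trajectory n w t -> forall i, 1 <= i <= n -> Dd n w 1 - Dd n w i = t i * n.
Proof.
  intros Hn HD [sR [sL [HR [HL Ht]]]] i Hi.
  destruct (HD 1 i) as [e He].
  pose proof (chamber_val n w sR Hn HR i e Hi He) as E1.
  pose proof (chamber_val n [] sL Hn HL i 0 Hi ltac:(unfold Dd, pos; simpl; ring)) as E2.
  rewrite Ht by auto. rewrite E1, E2. rewrite He. ring.
Qed.

Lemma traj_exists n w : 2 <= n -> (forall x y, exists e, Dd n w x - Dd n w y = e * n) ->
  exists t, is_trajectory n w t.
Proof.
  intros Hn HD.
  destruct (chamber_exists n w Hn HD) as [sR HR].
  destruct (chamber_exists n [] Hn ltac:(intros x y; exists 0; unfold Dd, pos; simpl; ring)) as [sL HL].
  exists (fun i => sR i - sL i). exists sR, sL. split; [exact HR|]. split; [exact HL|]. auto.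
Qed.

Lemma wnum_eq n b : 0 < n -> exists c, b = wire_num n b + c * n.
Proof.
  intros Hn. exists ((b - 1) / n). unfold wire_num.
  pose proof (Z.div_mod (b - 1) n ltac:(lia)). lia.
Qed.

Lemma wnum_range n b : 0 < n -> 1 <= wire_num n b <= n.
Proof. intros Hn. unfold wire_num. pose proof (Z.mod_pos_bound (b - 1) n Hn). lia. Qed.

Lemma wnum_small n j : 1 <= j <= n -> wire_num n j = j.
Proof. intros H. unfold wire_num. rewrite Z.mod_small by lia. ring. Qed.

Lemma wnum_cong n b b' : 0 < n -> b mod n = b' mod n -> wire_num n b = wire_num n b'.
Proof.
  intros Hn H. apply mod_ex in H; [|lia]. destruct H as [c ->]. unfold wire_num.
  replace (b' + c * n - 1) with ((b' - 1) + c * n) by ring. rewrite mod_addm; lia.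
Qed.

Lemma crossing_exists n w v u : 2 <= n -> v < u -> pos n w v > pos n w u ->
  exists c, In c (crossings n w) /\ (fst c) mod n = u mod n /\ (snd c) mod n = v mod n.
Proof.
  intros Hn Hvu Hp.
  destruct (flip n [] w v u Hn ltac:(unfold pos; simpl; lia) ltac:(simpl; lia))
    as [v1 [l [v2 [E [E1 E2]]]]].
  simpl in E1, E2.
  exists (wstate n v1 (l + 1), wstate n v1 l). split.
  - unfold crossings. apply cross_in. exists v1, l, v2. auto.
  - apply mod_ex in E1; [|lia]. destruct E1 as [c Hc]. simpl.
    assert (A1 : wstate n v1 (pos n v1 v) = v) by (apply wstate_pos; lia).
    assert (A2 : wstate n v1 (pos n v1 u) = u) by (apply wstate_pos; lia).
    rewrite Hc, wstate_per in A1 by lia.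
    rewrite E2, Hc in A2. replace (l + c * n + 1) with ((l + 1) + c * n) in A2 by ring.
    rewrite wstate_per in A2 by lia.
    rewrite <- A1, <- A2, !mod_addm by lia. auto.
Qed.

Lemma pi_surj n pi : 1 <= n -> (forall i, 1 <= i <= n -> 1 <= pi i <= n) ->
  (forall i j, 1 <= i <= n -> 1 <= j <= n -> pi i = pi j -> i = j) ->
  forall j, 1 <= j <= n -> exists r, 1 <= r <= n /\ pi r = j.
Proof.
  intros Hn Hr Hi j Hj.
  set (L := map Z.of_nat (seq 1 (Z.to_nat n))).
  assert (HL : forall z, In z L <-> 1 <= z <= n).
  { intros z. unfold L. rewrite in_map_iff. split.
    - intros [k [<- Hk]]. apply in_seq in Hk. lia.
    - intros Hz. exists (Z.to_nat z). split; [lia|]. apply in_seq. lia. }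
  assert (ND : NoDup L).
  { unfold L. apply NoDup_map_NoDup_ForallPairs; [intros a b _ _; lia|]. apply seq_NoDup. }
  assert (ND2 : NoDup (map pi L)).
  { apply NoDup_map_NoDup_ForallPairs; [|exact ND].
    intros a b Ha Hb. apply Hi; apply HL; auto. }
  assert (Inc : incl (map pi L) L).
  { intros z Hz. apply in_map_iff in Hz. destruct Hz as [a [<- Ha]]. apply HL. apply Hr, HL, Ha. }
  assert (Inc2 : incl L (map pi L)) by (apply NoDup_length_incl; [exact ND2 | rewrite length_map; lia | exact Inc]).
  assert (In j (map pi L)) as Hj' by (apply Inc2, HL, Hj).
  apply in_map_iff in Hj'. destruct Hj' as [r [Er Hr']]. exists r. split; [apply HL; auto|auto].
Qed.

Lemma chainZ n (f : Z -> Z) : (forall r, 1 <= r < n -> f r <= f (r + 1)) ->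
  forall a b, 1 <= a -> a <= b -> b <= n -> f a <= f b.
Proof.
  intros H a b Ha Hab Hb.
  remember (Z.to_nat (b - a)) as k eqn:Ek. revert b Hab Hb Ek.
  induction k as [|k IH]; intros b Hab Hb Ek.
  - assert (b = a) by lia. subst. lia.
  - specialize (IH (b - 1) ltac:(lia) ltac:(lia) ltac:(lia)).
    specialize (H (b - 1) ltac:(lia)). replace (b - 1 + 1) with b in H by ring. lia.
Qed.

Lemma chainR n (f : Z -> R) : (forall r, 1 <= r < n -> Rgt (f r) (f (r + 1))) ->
  forall a b, 1 <= a -> a < b -> b <= n -> Rgt (f a) (f b).
Proof.
  intros H a b Ha Hab Hb.
  remember (Z.to_nat (b - a - 1)) as k eqn:Ek. revert b Hab Hb Ek.
  induction k as [|k IH]; intros b Hab Hb Ek.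
  - assert (b = a + 1) by lia. subst. apply H. lia.
  - specialize (IH (b - 1) ltac:(lia) ltac:(lia) ltac:(lia)).
    specialize (H (b - 1) ltac:(lia)). replace (b - 1 + 1) with b in H by ring. lra.
Qed.

Theorem proposition7p4 (n : Z) (alpha : Z -> R) (pi : Z -> Z) (w : list Z) :
  3 <= n ->
  (forall i, 1 <= i <= n -> 1 <= pi i <= n) ->
  (forall i j, 1 <= i <= n -> 1 <= j <= n -> pi i = pi j -> i = j) ->
  (forall i, 1 <= i < n -> Rgt (alpha (pi i)) (alpha (pi (i + 1)))) ->
  valid_word n w -> reduced_word n w -> is_glide n w ->
  (all_params_positive n alpha w <->
   forall t : Z -> Z, is_trajectory n w t ->
     forall i, 1 <= i < n -> t (pi i) >= t (pi (i + 1))).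
Proof.
  intros Hn3 Hpr Hpi Hal Hv Hr Hg.
  assert (Hn : 2 <= n) by lia.
  pose proof (glide_D n w Hn Hg) as HD.
  set (D := Dd n w).
  assert (Tcmp : forall t, is_trajectory n w t -> forall a b, 1 <= a <= n -> 1 <= b <= n ->
            (t a >= t b <-> D a <= D b)).
  { intros t Ht a b Ha Hb. pose proof (traj_val n w t Hn HD Ht a Ha).
    pose proof (traj_val n w t Hn HD Ht b Hb). unfold D. split; intros; nia. }
  assert (Dwn : forall x, D (wire_num n x) = D x).
  { intros x. destruct (wnum_eq n x ltac:(lia)) as [c Hc].
    unfold D. rewrite Hc at 2. rewrite Dd_per by lia. reflexivity. }
  split.
  - intros Hpos t Ht r Hrr.
    pose proof (Hpr r ltac:(lia)). pose proof (Hpr (r + 1) ltac:(lia)).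
    apply (Tcmp t Ht); [lia|lia|].
    destruct (Z.le_gt_cases (D (pi r)) (D (pi (r + 1)))) as [L|L]; [exact L|exfalso].
    set (i := pi r) in *. set (j := pi (r + 1)) in *.
    destruct (HD i j) as [e He]. fold D in He.
    assert (e >= 1) by nia.
    assert (Hex : exists u, i < u /\ pos n w i > pos n w u /\ u mod n = j mod n).
    { destruct (Z.lt_total i j) as [L2|[L2|L2]].
      - exists j. unfold D, Dd in *. split; [lia|]. split; [nia|auto].
      - rewrite L2 in L. lia.
      - exists (j + 1 * n). unfold D, Dd in *. rewrite pos_per by lia. split; [lia|].
        split; [nia|]. apply mod_addm; lia. }
    destruct Hex as [u [Hu1 [Hu2 Hu3]]].
    destruct (crossing_exists n w i u Hn Hu1 Hu2) as [c [Hc [Hc1 Hc2]]].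
    unfold all_params_positive in Hpos. rewrite Forall_forall in Hpos.
    specialize (Hpos c Hc). simpl in Hpos.
    rewrite (wnum_cong n (fst c) j ltac:(lia) ltac:(congruence)) in Hpos.
    rewrite (wnum_cong n (snd c) i ltac:(lia) ltac:(congruence)) in Hpos.
    rewrite !wnum_small in Hpos by lia.
    specialize (Hal r Hrr). fold i j in Hal. lra.
  - intros Htr.
    destruct (traj_exists n w Hn HD) as [t Ht].
    assert (Ch : forall r, 1 <= r < n -> D (pi r) <= D (pi (r + 1))).
    { intros r Hrr. apply (Tcmp t Ht); [apply Hpr; lia|apply Hpr; lia|]. apply Htr; auto. }
    unfold all_params_positive, crossings. rewrite Forall_forall. intros c Hc.
    apply cross_in in Hc. destruct Hc as [u0 [l [v0 [Ew Ec]]]]. subst c. simpl.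
    destruct (keyK n w u0 l v0 Hn Hv Hr Ew) as [K1 K2].
    set (x := wstate n u0 l) in *. set (y := wstate n u0 (l + 1)) in *.
    assert (Dxy : D x > D y) by (unfold D, Dd; lia).
    destruct (pi_surj n pi ltac:(lia) Hpr Hpi (wire_num n x) (wnum_range n x ltac:(lia)))
      as [a [Ha Ea]].
    destruct (pi_surj n pi ltac:(lia) Hpr Hpi (wire_num n y) (wnum_range n y ltac:(lia)))
      as [b [Hb Eb]].
    rewrite <- Ea, <- Eb.
    destruct (Z.lt_ge_cases b a) as [L|L].
    + pose proof (chainR n (fun r => alpha (pi r)) Hal b a ltac:(lia) L ltac:(lia)). simpl in H. lra.
    + exfalso. pose proof (chainZ n (fun r => D (pi r)) Ch a b ltac:(lia) L ltac:(lia)) as H.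
      simpl in H. rewrite Ea, Eb, !Dwn in H. lia.
Qed.
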